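(* Let $\mathcal{S}\subseteq\mathcal{P}_{fin}(\mathbb{N})$ be an IP set, $r\geq1$, and $c:NU(\mathcal{S})\rightarrow[1,r]$ a coloring. Then there are a finite collection $\mathcal{B}\subseteq\mathcal{S}$ and an IP set $\mathcal{T}\subseteq\mathcal{S}-\mathcal{B}$ such that $\mathcal{B}$ half-matches $\mathcal{T}$.
   Context: $\mathcal{P}_{fin}(\mathbb{N})$ is the set of finite subsets of $\mathbb{N}$. For $\mathcal{S}\subseteq\mathcal{P}_{fin}(\mathbb{N})$, $NU(\mathcal{S})$ denotes the set of non-empty sets which are unions of finitely many elements of $\mathcal{S}$. A set $\mathcal{S}\subseteq\mathcal{P}_{fin}(\mathbb{N})$ is an IP set if it is closed under finite unions and contains an infinite family of pairwise disjoint elements. For $B\in\mathcal{S}$, $\mathcal{S}-B:=\{T\in\mathcal{S}: T\cap B=\emptyset\}$, and for $\mathcal{B}\subseteq\mathcal{S}$, $\mathcal{S}-\mathcal{B}:=\bigcap_{B\in\mathcal{B}}(\mathcal{S}-B)$. Relative to a coloring $c$: a family $\mathcal{D}$ half-matches a set $B$ if there is $D\in\mathcal{D}$ with $c(B)=c(D\cup B)$; $\mathcal{D}$ half-matches a family $\mathcal{B}$ if it half-matches every $B\in\mathcal{B}$. *)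

(* Defs.v *)
From mathcomp Require Import all_boot.
Set Implicit Arguments. Unset Strict Implicit. Unset Printing Implicit Defensive.

Definition nset := nat -> bool.

Definition fin_set (A : nset) : Prop := exists n, forall x, A x -> x < n.

Definition nfamily := nset -> Prop.

Definition setU (A B : nset) : nset := fun x => A x || B x.

Definition disj (A B : nset) : Prop := forall x, ~~ (A x && B x).

Definition fin_family (S : nfamily) : Prop := forall A, S A -> fin_set A.

(* IP set: closed under (binary, hence finite non-empty) unions and contains
   an infinite nfamily of pairwise disjoint elements (given as an injective
   sequence f of pairwise disjoint members). *)
Definition IP_set (S : nfamily) : Prop :=
  fin_family S /\
  (forall A B, S A -> S B -> S (setU A B)) /\
  exists f : nat -> nset,
    (forall n, S (f n)) /\
    (forall m n, f m = f n -> m = n) /\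
    (forall m n, m <> n -> disj (f m) (f n)).

Definition NU (S : nfamily) (A : nset) : Prop :=
  (exists x, A x) /\
  exists (n : nat) (g : nat -> nset),
    (forall i, i < n -> S (g i)) /\
    (forall x, A x = has (fun i => g i x) (iota 0 n)).

(* A finite collection B of elements of S, given as B = {g 0, ..., g (n-1)}. *)
Definition fin_coll_in (S : nfamily) (n : nat) (g : nat -> nset) : Prop :=
  forall i, i < n -> S (g i).

Definition subfam_minus (T S : nfamily) (n : nat) (g : nat -> nset) : Prop :=
  forall A, T A -> S A /\ forall i, i < n -> disj A (g i).

Definition half_matches (c : nset -> nat) (n : nat) (g : nat -> nset)
  (T : nfamily) : Prop :=
  forall B, T B -> exists2 i, i < n & c B = c (setU (g i) B).

(* Main.v *)
Require Import Defs.
From Stdlib Require Import Classical FunctionalExtensionality PropExtensionality ClassicalEpsilon.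

Section BW.
Variable U : Type.
Variable succ : (U -> Prop) -> (U -> Prop).
Hypothesis succ_incr : forall s x, s x -> succ s x.
Definition psub (A B : U -> Prop) := forall x, A x -> B x.
Definition bigU (F : (U->Prop)->Prop) : U -> Prop := fun x => exists s, F s /\ s x.
Inductive CC : (U -> Prop) -> Prop :=
 | CCs : forall s, CC s -> CC (succ s)
 | CCu : forall F, (forall s, F s -> CC s) -> CC (bigU F).

Lemma pset_ext (A B : U -> Prop) : psub A B -> psub B A -> A = B.
Proof. intros h1 h2. apply functional_extensionality; intro x.
apply propositional_extensionality; split; auto. Qed.

Lemma BW_aux c2 : (forall c3, CC c3 -> psub c3 c2 -> c2 = c3 \/ psub (succ c3) c2) ->
  forall c1, CC c1 -> psub (succ c2) c1 \/ psub c1 c2.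
Proof.
intros h c1 hc1; induction hc1 as [c3 hc3 ih | F hF ih].
- destruct ih as [ih|ih].
  + left. intros x hx. apply succ_incr. apply ih, hx.
  + destruct (h c3 hc3 ih) as [e|e].
    * left. subst. intros x hx; exact hx.
    * right; exact e.
- destruct (classic (psub (succ c2) (bigU F))) as [H|H]; [left; exact H| right].
  intros x [s [Fs sx]]. destruct (ih s Fs) as [H'|H'].
  + exfalso. apply H. intros y hy. exists s. split; auto.
  + apply H', sx.
Qed.

Lemma BW_succ_total c2 : CC c2 -> forall c1, CC c1 -> psub c1 c2 -> c2 = c1 \/ psub (succ c1) c2.
Proof.
intros hc2; induction hc2 as [c0 hc0 ih | F hF ih]; intros c1 hc1 h.
- destruct (BW_aux c0 ih c1 hc1) as [H|H].
  + left. apply pset_ext; auto.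
  + destruct (ih c1 hc1 H) as [e|e].
    * right. subst. intros x hx; exact hx.
    * right. intros x hx. apply succ_incr. apply e, hx.
- destruct (classic (psub (succ c1) (bigU F))) as [H|H]; [right; exact H|left].
  apply pset_ext; auto.
  intros x [s [Fs sx]].
  destruct (BW_aux s (ih s Fs) c1 hc1) as [H'|H'].
  + apply H'. apply succ_incr, sx.
  + destruct (ih s Fs c1 hc1 H') as [e|e].
    * subst; exact sx.
    * exfalso; apply H. intros y hy. exists s; split; auto.
Qed.

Lemma BW_total c1 c2 : CC c1 -> CC c2 -> psub c1 c2 \/ psub c2 c1.
Proof.
intros h1 h2.
destruct (BW_aux c2 (fun c3 hc3 hs => BW_succ_total c2 h2 c3 hc3 hs) c1 h1) as [H|H].
- right. intros x hx. apply H, succ_incr, hx.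
- left; exact H.
Qed.

Definition BWtop := bigU CC.
Lemma BWtop_CC : CC BWtop.
Proof. apply CCu. auto. Qed.
Lemma BWtop_fix : psub (succ BWtop) BWtop.
Proof. intros x hx. exists (succ BWtop). split; auto. apply CCs, BWtop_CC. Qed.
End BW.

Section Zorn.
Variable U : Type.
Variable le : U -> U -> Prop.
Hypothesis le_refl : forall x, le x x.
Hypothesis le_trans : forall x y z, le x y -> le y z -> le x z.
Definition chain (C : U -> Prop) := forall x y, C x -> C y -> le x y \/ le y x.
Hypothesis bound : forall C, chain C -> exists u, forall x, C x -> le x u.

Theorem zorn : exists m, forall x, le m x -> le x m.
Proof.
destruct (bound (fun _ => False)) as [u0 _]. { intros x y []. }
set (Q := fun (s : U -> Prop) y => ~ s y /\ chain (fun z => s z \/ z = y)).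
set (pick := fun s => epsilon (inhabits u0) (Q s)).
set (succ := fun (s : U -> Prop) x => s x \/ ((exists y, Q s y) /\ x = pick s)).
assert (incr : forall s x, s x -> succ s x) by (intros; left; auto).
assert (Hch : forall s, CC U succ s -> chain s).
{ intros s hs; induction hs as [s hs ih | F hF ih].
  - destruct (classic (exists y, Q s y)) as [[y hy]|hn].
    + assert (hq : Q s (pick s)) by (apply epsilon_spec; exists y; exact hy).
      destruct hq as [_ hq].
      intros a b ha hb. apply hq.
      * destruct ha as [ha|[_ ha]]; [left; auto| right; auto].
      * destruct hb as [hb|[_ hb]]; [left; auto| right; auto].
    + intros a b ha hb.
      destruct ha as [ha|[[y hy] _]]; [|exfalso; apply hn; exists y; auto].
      destruct hb as [hb|[[y hy] _]]; [|exfalso; apply hn; exists y; auto].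
      auto.
  - intros a b [s1 [F1 a1]] [s2 [F2 b2]].
    destruct (BW_total U succ incr s1 s2 (hF _ F1) (hF _ F2)) as [h|h].
    + apply (ih s2 F2); auto.
    + apply (ih s1 F1); auto. }
set (top := BWtop U succ).
assert (ctop : chain top) by (apply Hch, BWtop_CC).
destruct (bound top ctop) as [u hu].
exists u. intros x hux.
destruct (classic (top x)) as [tx|ntx]; [apply hu; auto|].
exfalso.
assert (hq : Q top x).
{ split; auto. intros a b ha hb.
  destruct ha as [ha|ha]; destruct hb as [hb|hb]; subst; auto.
  - left. apply le_trans with u; auto.
  - right. apply le_trans with u; auto. }
assert (hq' : Q top (pick top)) by (apply epsilon_spec; exists x; exact hq).
destruct hq' as [hn _]. apply hn.
apply (BWtop_fix U succ). right. split; [exists x; exact hq| reflexivity].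
Qed.
End Zorn.


Definition nsetP := nat -> Prop.
Definition fam := nsetP -> Prop.
Definition subP (A B : nsetP) := forall x, A x -> B x.
Definition capP (A B : nsetP) : nsetP := fun x => A x /\ B x.

Record pfilter (F : fam) : Prop := {
  pf_full : F (fun _ => True);
  pf_up : forall A B, F A -> subP A B -> F B;
  pf_cap : forall A B, F A -> F B -> F (capP A B);
  pf_ne : forall A, F A -> exists x, A x }.

Record uf (p : fam) : Prop := {
  uf_pf : pfilter p;
  uf_max0 : forall A, p A \/ p (fun x => ~ A x) }.

Lemma uf_max p A : uf p -> p A \/ p (fun x => ~ A x).
Proof. intros h; apply (uf_max0 _ h). Qed.
Lemma uf_full p : uf p -> p (fun _ => True). Proof. intros h; apply (pf_full _ (uf_pf _ h)). Qed.
Lemma uf_up p A B : uf p -> p A -> subP A B -> p B. Proof. intros h; apply (pf_up _ (uf_pf _ h)). Qed.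
Lemma uf_cap p A B : uf p -> p A -> p B -> p (capP A B). Proof. intros h; apply (pf_cap _ (uf_pf _ h)). Qed.
Lemma uf_ne p A : uf p -> p A -> exists x, A x. Proof. intros h; apply (pf_ne _ (uf_pf _ h)). Qed.
Lemma uf_not p A : uf p -> p A -> ~ p (fun x => ~ A x).
Proof. intros h hA hn. destruct (uf_ne p _ h (uf_cap p _ _ h hA hn)) as [x [a b]]. auto. Qed.

Theorem uf_lemma (G : fam) :
  (forall A B, G A -> G B -> G (capP A B)) -> (forall A, G A -> exists x, A x) ->
  exists p, uf p /\ forall A, G A -> p A.
Proof.
intros Gcap Gne.
set (PF := fun F : fam => pfilter F /\ forall A, G A -> F A).
set (T := sig PF).
set (le := fun a b : T => forall A, proj1_sig a A -> proj1_sig b A).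
assert (Hz : exists m : T, forall x, le m x -> le x m).
{ apply zorn.
  - intros x A h; exact h.
  - intros x y z h1 h2 A h. auto.
  - intros C Cch.
    set (Fb := fun A : nsetP => (exists B, G B /\ subP B A) \/ (exists c : T, C c /\ proj1_sig c A)
                 \/ A = fun _ => True).
    assert (hPF : PF Fb).
    { split; [split|].
      - right; right; reflexivity.
      - intros A B [[B0 [g s]]|[[c [cc ca]]|e]] s2.
        + left; exists B0; split; auto. intros x hx; apply s2, s, hx.
        + right; left; exists c; split; auto. destruct (proj2_sig c) as [pfc _].
          apply (pf_up _ pfc A); auto.
        + right; right. subst. apply functional_extensionality; intro x.
          apply propositional_extensionality; split; intros; [exact I| apply s2; exact I].
      - assert (lift : forall (c : T) A, (exists B, G B /\ subP B A) -> proj1_sig c A).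
        { intros c A [B0 [g s]]. destruct (proj2_sig c) as [pfc gc].
          apply (pf_up _ pfc B0); auto. }
        intros A B hA hB.
        destruct hA as [[A0 [gA sA]]|[[c [cc ca]]|eA]];
        destruct hB as [[B0 [gB sB]]|[[d [cd db]]|eB]].
        + left. exists (capP A0 B0). split; auto. intros x [h1 h2]; split; auto.
        + right; left. exists d; split; auto. destruct (proj2_sig d) as [pfd _].
          apply (pf_cap _ pfd); auto. apply lift. exists A0; auto.
        + subst. left. exists A0; split; auto. intros x hx; split; auto.
        + right; left. exists c; split; auto. destruct (proj2_sig c) as [pfc _].
          apply (pf_cap _ pfc); auto. apply lift. exists B0; auto.
        + right; left. destruct (Cch c d cc cd) as [h|h].
          * exists d; split; auto. destruct (proj2_sig d) as [pfd _]. apply (pf_cap _ pfd); auto.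
          * exists c; split; auto. destruct (proj2_sig c) as [pfc _]. apply (pf_cap _ pfc); auto.
        + subst. right; left. exists c; split; auto. destruct (proj2_sig c) as [pfc _].
          apply (pf_cap _ pfc); auto. apply (pf_full _ pfc).
        + subst. left. exists B0; split; auto. intros x hx; split; auto.
        + subst. right; left. exists d; split; auto. destruct (proj2_sig d) as [pfd _].
          apply (pf_cap _ pfd); auto. apply (pf_full _ pfd).
        + subst. right; right. apply functional_extensionality; intro x.
          apply propositional_extensionality; split; intros; [exact I| split; exact I].
      - intros A [[B0 [g s]]|[[c [cc ca]]|e]].
        + destruct (Gne B0 g) as [x hx]. exists x; auto.
        + destruct (proj2_sig c) as [pfc _]. apply (pf_ne _ pfc); auto.
        + subst. exists 0; auto.
      - intros A g. left. exists A; split; auto. intros x hx; exact hx. }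
    exists (exist PF Fb hPF). intros c cc A ca. simpl. right; left. exists c; auto. }
destruct Hz as [[m [pm gm]] hm].
exists m. split; [split; auto|auto].
intros A.
destruct (classic (m A)) as [h|h]; [left; auto|].
destruct (classic (m (fun x => ~ A x))) as [h'|h']; [right; auto|].
exfalso.
set (m' := fun B => exists M, m M /\ subP (capP M A) B).
assert (ne : forall M, m M -> exists x, M x /\ A x).
{ intros M hM. apply NNPP. intros hn. apply h'. apply (pf_up _ pm M); auto.
  intros x hx ha. apply hn. exists x; auto. }
assert (hPF : PF m').
{ split; [split|].
  - exists (fun _ => True). split. apply (pf_full _ pm). intros x _; exact I.
  - intros B C [M [hM s]] s2. exists M; split; auto. intros x hx; apply s2, s, hx.
  - intros B C [M [hM s]] [M' [hM' s']]. exists (capP M M'). split.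
    apply (pf_cap _ pm); auto. intros x [[a b] c]. split; [apply s|apply s']; split; auto.
  - intros B [M [hM s]]. destruct (ne M hM) as [x [a b]]. exists x. apply s; split; auto.
  - intros B g. exists B. split; auto. intros x [a _]; exact a. }
assert (hle : le (exist PF m (conj pm gm)) (exist PF m' hPF)).
{ intros B hB. simpl in *. exists B. split; auto. intros x [a _]; exact a. }
apply h. apply (hm _ hle). simpl. exists (fun _ => True). split. apply (pf_full _ pm).
intros x [_ a]; exact a.
Qed.


Definition addu (p q : fam) : fam := fun A => p (fun x => q (fun y => A (x + y))).

Lemma set_ext (A B : nsetP) : (forall x, A x <-> B x) -> A = B.
Proof. intros h; apply functional_extensionality; intro x; apply propositional_extensionality; auto. Qed.
Lemma fam_ext (p q : fam) : (forall A, p A <-> q A) -> p = q.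
Proof. intros h; apply functional_extensionality; intro x; apply propositional_extensionality; auto. Qed.

Lemma uf_addu p q : uf p -> uf q -> uf (addu p q).
Proof.
intros hp hq. split; [split|].
- unfold addu. apply (uf_up p (fun _ => True)); auto. apply uf_full; auto.
  intros x _. apply uf_full; auto.
- unfold addu. intros A B hA s. apply (uf_up p _ _ hp hA). intros x hx.
  apply (uf_up q _ _ hq hx). intros y; apply s.
- unfold addu. intros A B hA hB. apply (uf_up p _ _ hp (uf_cap p _ _ hp hA hB)).
  intros x [a b]. apply (uf_cap q _ _ hq a b).
- unfold addu. intros A hA. destruct (uf_ne p _ hp hA) as [x hx].
  destruct (uf_ne q _ hq hx) as [y hy]. exists (x + y); auto.
- intros A. unfold addu. destruct (uf_max p (fun x => q (fun y => A (x + y))) hp) as [h|h]; [left; auto|right].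
  apply (uf_up p _ _ hp h). intros x hx. destruct (uf_max q (fun y => A (x + y)) hq) as [h'|h']; [contradiction|exact h'].
Qed.

Lemma addu_assoc p q s : addu (addu p q) s = addu p (addu q s).
Proof.
apply fam_ext. intros A. unfold addu.
assert (e : (fun x => q (fun y => s (fun y0 => A (x + y + y0)))) =
            (fun x => q (fun y => s (fun y0 => A (x + (y + y0)))))).
{ apply functional_extensionality; intro x. f_equal. apply functional_extensionality; intro y.
  f_equal. apply functional_extensionality; intro z. rewrite PeanoNat.Nat.add_assoc. reflexivity. }
rewrite e. tauto.
Qed.

Section Ellis.
Variable E : nat -> nsetP.
Hypothesis E_add : forall k x y, E k x -> E k y -> E k (x + y).
Hypothesis E_cap : forall k l, exists m, subP (E m) (capP (E k) (E l)).
Hypothesis E_ne : forall k, exists x, E k x.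

Definition Hm (q : fam) := forall k, q (E k).
Definition closedK (K : fam -> Prop) := forall q, uf q -> (forall A, (forall r, K r -> r A) -> q A) -> K q.
Definition KP (K : fam -> Prop) := (exists q, K q) /\ (forall q, K q -> uf q /\ Hm q) /\ closedK K /\
   (forall q r, K q -> K r -> K (addu q r)).

Lemma Hm_add p q : uf p -> uf q -> Hm p -> Hm q -> Hm (addu p q).
Proof.
intros up uq hp hq k. unfold addu. apply (uf_up p _ _ up (hp k)). intros x hx.
apply (uf_up q _ _ uq (hq k)). intros y hy. apply E_add; auto.
Qed.

Lemma Hm_ne : exists q, uf q /\ Hm q.
Proof.
destruct (uf_lemma (fun A => exists k, subP (E k) A)) as [q [uq gq]].
- intros A B [k hk] [l hl]. destruct (E_cap k l) as [m hm]. exists m.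
  intros x hx. destruct (hm x hx). split; auto.
- intros A [k hk]. destruct (E_ne k) as [x hx]. exists x; auto.
- exists q; split; auto. intros k. apply gq. exists k. intros x hx; exact hx.
Qed.

Lemma minimal_K : exists M, KP M /\ forall K, KP K -> (forall q, K q -> M q) -> forall q, M q -> K q.
Proof.
set (T := sig KP).
set (le := fun a b : T => forall q, proj1_sig b q -> proj1_sig a q).
assert (Hz : exists m : T, forall x, le m x -> le x m).
{ apply zorn.
  - intros x q h; exact h.
  - intros x y z h1 h2 q h. auto.
  - intros C Cch.
    set (I := fun q => uf q /\ Hm q /\ forall c : T, C c -> proj1_sig c q).
    assert (hI : KP I).
    { split; [|split; [|split]].
      - destruct (classic (exists c, C c)) as [[c0 hc0]|hn].
        + set (Phi := fun (c : T) A => forall r, proj1_sig c r -> r A).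
          destruct (uf_lemma (fun A => exists c, C c /\ Phi c A)) as [q [uq gq]].
          * intros A B [c [cc ca]] [d [cd db]].
            destruct (Cch c d cc cd) as [h|h].
            -- exists d; split; auto. intros r hr. destruct (proj2_sig d) as [_ [hd _]].
               apply uf_cap. apply (hd r hr). apply ca, h, hr. apply db, hr.
            -- exists c; split; auto. intros r hr. destruct (proj2_sig c) as [_ [hc _]].
               apply uf_cap. apply (hc r hr). apply ca, hr. apply db, h, hr.
          * intros A [c [cc ca]]. destruct (proj2_sig c) as [[r hr] [hc _]].
            apply (uf_ne r). apply (hc r hr). apply ca, hr.
          * assert (inc : forall c, C c -> proj1_sig c q).
            { intros c cc. destruct (proj2_sig c) as [_ [_ [cl _]]]. apply cl; auto.
              intros A hA. apply gq. exists c; auto. }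
            exists q. split; [|split]; auto.
            destruct (proj2_sig c0) as [_ [hc _]]. apply (hc q (inc c0 hc0)).
        + destruct Hm_ne as [q [uq hq]]. exists q. split; [|split]; auto.
          intros c cc; exfalso; apply hn; exists c; auto.
      - intros q [a [b _]]; auto.
      - intros q uq hq. split; [|split]; auto.
        + intros k. apply hq. intros r [_ [hr _]]. apply hr.
        + intros c cc. destruct (proj2_sig c) as [_ [_ [cl _]]]. apply cl; auto.
          intros A hA. apply hq. intros r [_ [_ hr]]. apply hA, hr, cc.
      - intros q r [uq [hq cq]] [ur [hr cr]]. split; [|split].
        + apply uf_addu; auto.
        + apply Hm_add; auto.
        + intros c cc. destruct (proj2_sig c) as [_ [_ [_ sg]]]. apply sg; auto. }
    exists (exist KP I hI). intros c cc q [_ [_ h]]. apply h, cc. }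
destruct Hz as [[M hM] hmax]. exists M. split; auto.
intros K hK sub q Mq.
apply (hmax (exist KP K hK)); auto.
Qed.

Theorem idempotent_exists : exists p, uf p /\ Hm p /\ addu p p = p.
Proof.
destruct minimal_K as [M [[[p Mp] [MH [Mcl Msg]]] Mmin]].
destruct (MH p Mp) as [up hp].
set (hat := fun A : nsetP => fun x => p (fun y => A (x + y))).
set (K1 := fun q => exists r, M r /\ q = addu r p).
assert (K1KP : KP K1).
{ split; [|split; [|split]].
  - exists (addu p p). exists p; auto.
  - intros q [r [Mr e]]. subst. destruct (MH r Mr). split. apply uf_addu; auto. apply Hm_add; auto.
  - intros q uq hq.
    destruct (uf_lemma (fun B => exists M0 A, (forall r, M r -> r M0) /\ q A /\ B = capP M0 (hat A)))
      as [r [ur gr]].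
    + intros B C [M0 [A [h0 [qA e1]]]] [M1 [A1 [h1 [qA1 e2]]]]. subst.
      exists (capP M0 M1), (capP A A1). split; [|split].
      * intros r0 hr0. destruct (MH r0 hr0). apply (uf_cap r0); auto; [apply h0|apply h1]; exact hr0.
      * apply (uf_cap q); auto.
      * apply set_ext. intros x. unfold capP, hat. split.
        -- intros [[a b] [c d]]. split; [split|]; auto. apply (uf_cap p _ _ up b d).
        -- intros [[a c] b]. split; split; auto.
           apply (uf_up p _ _ up b). intros y [y1 y2]; auto.
           apply (uf_up p _ _ up b). intros y [y1 y2]; auto.
    + intros B [M0 [A [h0 [qA e]]]]. subst. apply NNPP. intros hn.
      assert (hna : forall r, M r -> addu r p (fun x => ~ A x)).
      { intros r0 Mr0. destruct (MH r0 Mr0) as [ur0 _]. unfold addu.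
        apply (uf_up r0 (capP M0 (fun x => ~ hat A x))). apply ur0.
        { apply (uf_cap r0). apply ur0. apply h0, Mr0. destruct (uf_max r0 (hat A) ur0) as [h|h]; auto.
          exfalso. destruct (uf_ne r0 _ ur0 (uf_cap r0 _ _ ur0 (h0 r0 Mr0) h)) as [x hx]. apply hn; exists x; auto. }
        intros x [_ hx]. destruct (uf_max p (fun y => A (x + y)) up) as [h|h]; [contradiction|exact h]. }
      apply (uf_not q A uq qA). apply hq. intros r0 [r1 [Mr1 e]]. subst. apply hna; auto.
    + exists r. assert (Mr : M r).
      { apply Mcl; auto. intros A hA. apply (uf_up r (capP A (hat (fun _ => True))) _ ur).
        apply gr. exists A, (fun _ => True). split; auto. split; auto. apply uf_full; auto.
        intros x [a _]; exact a. }
      split; auto. apply fam_ext. intros A. split.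
      * intros qA. unfold addu. apply (uf_up r (capP (fun _ => True) (hat A)) _ ur).
        apply gr. exists (fun _ => True), A. split; auto. intros r0 hr0. destruct (MH r0 hr0). apply uf_full; auto.
        intros x [_ hx]; exact hx.
      * intros hA. destruct (uf_max q A uq) as [h|h]; auto. exfalso.
        assert (h2 : addu r p (fun x => ~ A x)).
        { unfold addu. apply (uf_up r (capP (fun _ => True) (hat (fun x => ~ A x))) _ ur).
          apply gr. exists (fun _ => True), (fun x => ~ A x). split; auto. intros r0 hr0. destruct (MH r0 hr0). apply uf_full; auto.
          intros x [_ hx]; exact hx. }
        apply (uf_not _ _ (uf_addu r p ur up) hA h2).
  - intros q q' [r [Mr e]] [r' [Mr' e']]. subst. exists (addu (addu r p) r'). split.
    apply Msg; auto. rewrite !addu_assoc. reflexivity. }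
assert (pK1 : K1 p).
{ apply (Mmin K1 K1KP); auto. intros q [r [Mr e]]; subst; apply Msg; auto. }
destruct pK1 as [r0 [Mr0 e0]].
set (K2 := fun q => M q /\ addu q p = p).
assert (K2KP : KP K2).
{ split; [|split; [|split]].
  - exists r0; split; auto.
  - intros q [Mq _]; auto.
  - intros q uq hq. assert (Mq : M q).
    { apply Mcl; auto. intros A hA. apply hq. intros r [Mr _]; apply hA, Mr. }
    split; auto. apply fam_ext; intros A. split.
    + intros h. destruct (uf_max p A up) as [h'|h']; auto. exfalso.
      apply (uf_not _ _ (uf_addu q p uq up) h). unfold addu.
      apply hq. intros r [Mr e]. rewrite <- e in h'. exact h'.
    + intros pA. destruct (uf_max _ A (uf_addu q p uq up)) as [h|h]; auto. exfalso.
      unfold addu in h. 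
      assert (hq' : q (fun x => p (fun y => A (x + y)))).
      { apply hq. intros r [Mr e]. rewrite <- e in pA. exact pA. }
      destruct (uf_ne q _ uq (uf_cap q _ _ uq hq' h)) as [x [h1 h2]].
      apply (uf_not p _ up h1). exact h2.
  - intros q q' [Mq eq] [Mq' eq']. split. apply Msg; auto. rewrite addu_assoc, eq', eq. reflexivity. }
assert (pK2 : K2 p) by (apply (Mmin K2 K2KP); [intros q [a _]; auto| auto]).
exists p. destruct pK2. auto.
Qed.
End Ellis.

From mathcomp Require Import all_boot.
Import Defs.
Set Implicit Arguments. Unset Strict Implicit. Unset Printing Implicit Defensive.

Definition bit (i m : nat) : bool := odd (m %/ 2 ^ i).

Lemma bit_small i k a : a < 2 ^ k -> k <= i -> bit i a = false.
Proof.
move=> ha hki. rewrite /bit divn_small //. apply: (leq_trans ha). by rewrite leq_exp2l.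
Qed.

Lemma odd_pow2 d : 0 < d -> odd (2 ^ d) = false.
Proof. by case: d => // d _; rewrite oddX. Qed.

Lemma bit_mul i k q : i < k -> bit i (q * 2 ^ k) = false.
Proof.
move=> hik. rewrite /bit -(subnKC (ltnW hik)) expnD [2 ^ i * _]mulnC mulnA mulnK ?expn_gt0 //.
by rewrite oddM odd_pow2 ?andbF // subn_gt0.
Qed.

Lemma bit_add i k a b : a < 2 ^ k -> 2 ^ k %| b -> bit i (a + b) = bit i a || bit i b.
Proof.
move=> ha /dvdnP [q ->]. case: (ltnP i k) => hik.
- rewrite (bit_mul q hik) orbF /bit.
  rewrite -(subnKC (ltnW hik)) expnD [2 ^ i * _]mulnC mulnA addnC divnMDl ?expn_gt0 //.
  by rewrite oddD oddM odd_pow2 ?andbF ?addbF // subn_gt0.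
- rewrite (bit_small ha hik) /=. rewrite /bit -(subnKC hik) expnD divnMA [a + _]addnC divnMDl ?expn_gt0 //.
  by rewrite (divn_small ha) addn0 divnMA mulnK ?expn_gt0.
Qed.

Lemma bit_pos m : 0 < m -> exists i, bit i m.
Proof.
elim/ltn_ind: m => m IH hm.
case hodd: (odd m).
- exists 0. by rewrite /bit expn0 divn1.
- have h2 : m = (m %/ 2) * 2 by rewrite {1}(divn_eq m 2) modn2 hodd addn0.
  have hlt : m %/ 2 < m by rewrite ltn_Pdiv.
  have hp : 0 < m %/ 2 by move: hm; rewrite {1}h2 muln_gt0 andbT.
  have [i hi] := IH _ hlt hp. exists i.+1. by rewrite /bit expnS divnMA.
Qed.

Lemma bit_bound i m : bit i m -> i < m.
Proof.
move=> h. rewrite ltnNge. apply/negP => hmi. have hm : m < 2 ^ m by rewrite ltn_expl.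
by rewrite (bit_small hm hmi) in h.
Qed.

Lemma bit0n i : bit i 0 = false. Proof. by rewrite /bit div0n. Qed.


Arguments uf_cap {p A B}.
Arguments uf_up {p A B}.
Arguments uf_ne {p A}.
Arguments uf_not {p A}.
Arguments uf_max {p} A.
Arguments uf_full {p}.

Definition Ek (k : nat) : nsetP := fun x => 0 < x /\ 2 ^ k %| x.

Lemma Ek_add k x y : Ek k x -> Ek k y -> Ek k (x + y).
Proof. move=> [h1 h2] [h3 h4]; split; first by rewrite addn_gt0 h1. by rewrite dvdn_add. Qed.
Lemma Ek_cap k l : exists m, subP (Ek m) (capP (Ek k) (Ek l)).
Proof.
exists (maxn k l) => x [h1 h2]; split; split => //; apply: dvdn_trans h2; rewrite dvdn_Pexp2l //.
  by rewrite leq_maxl. by rewrite leq_maxr.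
Qed.
Lemma Ek_ne k : exists x, Ek k x.
Proof. exists (2 ^ k); split; by rewrite ?expn_gt0. Qed.

Section GG.
Variable p : fam.
Hypothesis up : uf p.
Hypothesis hp : Hm Ek p.
Hypothesis idem : addu p p = p.
Variable A : nsetP.
Hypothesis pA : p A.

Definition star (B : nsetP) : nsetP := fun x => B x /\ p (fun y => B (x + y)).

Lemma p_star B : p B -> p (star B).
Proof.
move=> hB. apply: (uf_cap up hB). by rewrite -idem in hB.
Qed.

Lemma star_mono B C : subP B C -> subP (star B) (star C).
Proof. move=> s x [h1 h2]; split; first by apply: s. apply: (uf_up up h2) => y; apply: s. Qed.

Lemma star_shift B x : star B x -> p (fun y => star B (x + y)).
Proof.
move=> [h1 h2]. apply: (uf_up up (p_star h2)) => y [a b]; split => //.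
apply: (uf_up up b) => z. by rewrite addnA.
Qed.

Definition chooseX (B : nsetP) (e : nat) : nat := epsilon (inhabits 0) (fun x => star B x /\ Ek e x).

Fixpoint st (n : nat) : nsetP * nat :=
  match n with
  | 0 => (A, 0)
  | n'.+1 => let (B, s) := st n' in (fun y => star B y /\ star B (chooseX B s + y), s + chooseX B s)
  end.
Definition AA n := (st n).1.
Definition ss n := (st n).2.
Definition xx n := chooseX (AA n) (ss n).

Lemma AAS n : AA n.+1 = fun y => star (AA n) y /\ star (AA n) (xx n + y).
Proof. unfold xx, AA, ss; simpl. destruct (st n); reflexivity. Qed.
Lemma ssS n : ss n.+1 = ss n + xx n.
Proof. unfold xx, AA, ss; simpl. destruct (st n); reflexivity. Qed.
Lemma ss0 : ss 0 = 0. Proof. by []. Qed.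
Lemma AA0 : AA 0 = A. Proof. by []. Qed.

Lemma pAA n : p (AA n) /\ star (AA n) (xx n) /\ Ek (ss n) (xx n).
Proof.
have spec : forall B e, p B -> star B (chooseX B e) /\ Ek e (chooseX B e).
{ move=> B e hB. apply: (epsilon_spec (inhabits 0) (fun x => star B x /\ Ek e x)).
  have := uf_ne up (uf_cap up (p_star hB) (hp e)). by move=> [x [h1 h2]]; exists x. }
elim: n => [|n [h1 [h2 h3]]].
- have h : p (AA 0) by rewrite AA0. split=> //. exact: spec.
- have h : p (AA n.+1) by rewrite AAS; apply: (uf_cap up (p_star h1) (star_shift h2)).
  split => //. exact: spec.
Qed.

Lemma AA_sub n : subP (AA n.+1) (AA n).
Proof. rewrite AAS => y [[h _] _]; exact h. Qed.

Lemma GG_claim N (P : nat -> bool) : forall d m, m + d = N -> (exists n, m <= n < N /\ P n) ->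
  star (AA m) (\sum_(m <= n < N | P n) xx n).
Proof.
elim=> [|d IH] m hmd [n [hn Pn]].
- rewrite addn0 in hmd; subst. case/andP: hn => h1 h2. by rewrite ltnNge h1 in h2.
- have hmN : m < N by rewrite -hmd addnS ltnS leq_addr.
  rewrite big_ltn_cond //.
  have e1 : m.+1 + d = N by rewrite -hmd addSnnS.
  have sub1 : subP (star (AA m.+1)) (star (AA m)) by apply: star_mono; apply: AA_sub.
  case: (boolP (P m)) => Pm.
  + case: (classic (exists n, m.+1 <= n < N /\ P n)) => [ex|nex].
    * have := IH m.+1 e1 ex. move=> [h _]. rewrite AAS in h.
      exact: h.2.
    * rewrite big1_seq ?addn0; first by have [_ [h _]] := pAA m; exact h.
      move=> i /andP [Pi]; rewrite mem_index_iota => hi. exfalso; apply: nex. by exists i.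
  + apply: sub1. apply: (IH m.+1 e1).
    exists n; split => //. case/andP: hn => h1 h2. rewrite h2 andbT ltn_neqAle h1 andbT.
    apply/eqP => e; subst. by rewrite Pn in Pm.
Qed.

Lemma GG_sum N (P : nat -> bool) : (exists n, n < N /\ P n) -> A (\sum_(0 <= n < N | P n) xx n).
Proof.
move=> [n [h1 h2]]. have := GG_claim (add0n N) (ex_intro _ n (conj h1 h2)). by move=> [h _].
Qed.

Lemma xx_spec n : 0 < xx n /\ 2 ^ (ss n) %| xx n.
Proof. by have [_ [_ h]] := pAA n. Qed.

Lemma ss_mono m n : m <= n -> ss m <= ss n.
Proof. elim: n => [|n IH]; first by rewrite leqn0 => /eqP ->. rewrite leq_eqVlt ltnS => /orP [/eqP -> //|h].
  by rewrite ssS (leq_trans (IH h)) ?leq_addr. Qed.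

Lemma xx_le m n : m < n -> xx m <= ss n.
Proof. move=> h. apply: (@leq_trans (ss m.+1)); last by apply: ss_mono. by rewrite ssS leq_addl. Qed.

Lemma psum_le N (P : nat -> bool) : \sum_(0 <= i < N | P i) xx i <= ss N.
Proof.
elim: N => [|N IH]; first by rewrite big_geq.
rewrite big_mkcond big_nat_recr //= -big_mkcond ssS. apply: leq_add => //. by case: (P N).
Qed.

Lemma sum_bits j N (P : nat -> bool) : bit j (\sum_(0 <= i < N | P i) xx i) = has (fun i => P i && bit j (xx i)) (iota 0 N).
Proof.
elim: N => [|N IH]; first by rewrite big_geq // bit0n.
have -> : iota 0 N.+1 = iota 0 N ++ [:: N] by rewrite -addn1 iotaD.
rewrite big_mkcond big_nat_recr //= -big_mkcond has_cat /= orbF.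
case: (P N) => /=.
- rewrite (@bit_add j (ss N)) ?IH //; last by case: (xx_spec N).
  apply: (leq_ltn_trans (psum_le N P)). by rewrite ltn_expl.
- by rewrite addn0 IH orbF.
Qed.
End GG.




Lemma uf_finite p (R : nat -> nsetP) K : uf p -> p (fun m => exists k, k < K /\ R k m) ->
  exists k, k < K /\ p (R k).
Proof.
move=> up. elim: K => [|K IH] h.
- have [x [k [hk _]]] := uf_ne up h. by [].
- case: (uf_max (R K) up) => hK; first by exists K.
  have [k [hk hR]] : exists k, k < K /\ p (R k).
  { apply: IH. apply: (uf_up up (uf_cap up h hK)) => m [[k [hk hR]] hn].
    exists k; split => //. rewrite ltnS leq_eqVlt in hk. case/orP: hk => [/eqP e|//].
    by subst. }
  exists k; split => //. by rewrite ltnS ltnW.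
Qed.

Section Main.
Variable S : nfamily.
Variable r : nat.
Variable c : nset -> nat.
Hypothesis Sfin : fin_family S.
Hypothesis Sun : forall A B, S A -> S B -> S (setU A B).
Variable f : nat -> nset.
Hypothesis fS : forall n, S (f n).
Hypothesis finj : forall m n, f m = f n -> m = n.
Hypothesis fdisj : forall m n, m <> n -> disj (f m) (f n).
Hypothesis hc : forall A, NU S A -> 1 <= c A <= r.

Definition f' n : nset := setU (f (2 * n)) (f (2 * n).+1).

Lemma f'S n : S (f' n). Proof. apply: Sun; apply: fS. Qed.

Lemma f'ne n : exists z, f' n z.
Proof.
apply: NNPP => hn. have e : f (2 * n) = f (2 * n).+1.
{ apply: functional_extensionality => z.
  have : ~~ f' n z by apply/negP => h; apply: hn; exists z.
  rewrite /f' /setU negb_or => /andP [/negbTE -> /negbTE ->] //. }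
have := congr1 odd (finj e). by rewrite /= oddM.
Qed.

Lemma f'disj m n z : m <> n -> f' m z -> f' n z -> False.
Proof.
move=> hmn hm hn.
have d : forall a b, a <> b -> f a z -> f b z -> False.
{ move=> a b hab ha hb. have := fdisj hab z. by rewrite ha hb. }
have e1 : forall a b, 2 * a = 2 * b -> a = b.
{ move=> a b /eqP; rewrite eqn_pmul2l // => /eqP //. }
have e2 : forall a b, 2 * a <> (2 * b).+1.
{ move=> a b /(congr1 odd). by rewrite /= !oddM. }
move: hm hn; rewrite /f' /setU => /orP [ha|ha] /orP [hb|hb].
- apply: (d _ _ _ ha hb) => e; apply: hmn; exact: e1.
- apply: (d _ _ _ ha hb); apply: e2.
- apply: (d _ _ _ ha hb) => e; exact: (e2 n m (esym e)).
- apply: (d _ _ _ ha hb) => [[e]]; apply: hmn; exact: e1.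
Qed.

Definition Uset (m : nat) : nset := fun z => has (fun i => bit i m && f' i z) (iota 0 m).

Lemma U_spec m z : Uset m z <-> exists i, bit i m /\ f' i z.
Proof.
split.
- move/hasP => [i _ /andP [h1 h2]]. by exists i.
- move=> [i [h1 h2]]. apply/hasP. exists i; last by rewrite h1.
  by rewrite mem_iota add0n (bit_bound h1).
Qed.

Lemma nset_ext (X Y : nset) : (forall z, X z = Y z) -> X = Y.
Proof. exact: functional_extensionality. Qed.

Lemma U_S m : 0 < m -> S (Uset m).
Proof.
move=> hm.
suff H : forall j, (exists i, i < j /\ bit i m) -> S (fun z => has (fun i => bit i m && f' i z) (iota 0 j)).
{ apply: H. have [i hi] := bit_pos hm. exists i; split => //. exact: bit_bound. }
elim=> [|j IH] [i [hi hb]]; first by [].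
have eq : forall z, has (fun i => bit i m && f' i z) (iota 0 j.+1) =
  has (fun i => bit i m && f' i z) (iota 0 j) || (bit j m && f' j z).
{ move=> z. by rewrite -addn1 iotaD has_cat /= orbF. }
case: (classic (exists i, i < j /\ bit i m)) => [ex|nex].
- have hS := IH ex. case hbj: (bit j m).
  + have -> : (fun z => has (fun i => bit i m && f' i z) (iota 0 j.+1)) =
        setU (fun z => has (fun i => bit i m && f' i z) (iota 0 j)) (f' j).
    { apply: nset_ext => z. by rewrite eq hbj. }
    apply: Sun => //. exact: f'S.
  + have -> : (fun z => has (fun i => bit i m && f' i z) (iota 0 j.+1)) =
        (fun z => has (fun i => bit i m && f' i z) (iota 0 j)).
    { apply: nset_ext => z. by rewrite eq hbj orbF. }
    exact: hS.
- have hbj : bit j m.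
  { rewrite ltnS leq_eqVlt in hi. case/orP: hi => [/eqP <- //|hi]. exfalso; apply: nex; by exists i. }
  have -> : (fun z => has (fun i => bit i m && f' i z) (iota 0 j.+1)) = f' j.
  { apply: nset_ext => z. rewrite eq hbj /=.
    have -> : has (fun i => bit i m && f' i z) (iota 0 j) = false; last by [].
    apply/hasP => [[i0 hi0 /andP [hb0 _]]]. apply: nex. exists i0; split => //.
    by rewrite mem_iota add0n in hi0. }
  exact: f'S.
Qed.

Lemma U_ne m : 0 < m -> exists z, Uset m z.
Proof.
move=> hm. have [i hi] := bit_pos hm. have [z hz] := f'ne i. exists z. apply/U_spec. by exists i.
Qed.

Lemma NU_of A : S A -> (exists z, A z) -> NU S A.
Proof.
move=> hA hne. split => //. exists 1, (fun _ => A). split; first by move=> i _.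
move=> x /=. by rewrite orbF.
Qed.

Lemma col_range m : 0 < m -> 1 <= c (Uset m) <= r.
Proof. move=> hm. apply: hc. apply: NU_of; [exact: U_S|exact: U_ne]. Qed.


Section Inner.
Variable p : fam.
Hypothesis up : uf p.
Hypothesis hp : Hm Ek p.
Hypothesis idem : addu p p = p.
Variable k : nat.
Definition Acol : nsetP := fun m => 0 < m /\ c (Uset m) = k.
Hypothesis pA : p Acol.
Notation x := (xx p Acol).

Lemma disjU a b z : a <> b -> Uset (x a) z -> Uset (x b) z -> False.
Proof.
have main : forall a b, a < b -> Uset (x a) z -> Uset (x b) z -> False.
{ move=> a0 b0 hab /U_spec [i [hi fi]] /U_spec [j [hj fj]].
  case: (eqVneq i j) => [eij|nij]; last by apply: (f'disj (elimN eqP nij) fi fj).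
  subst j.
  have hlt : i < ss p Acol b0.
  { rewrite ltnNge; apply/negP => hle.
    have hx : x a0 < 2 ^ (ss p Acol b0).
    { apply: (leq_ltn_trans (xx_le p Acol hab)). by rewrite ltn_expl. }
    by rewrite (bit_small hx hle) in hi. }
  have [_ /dvdnP [q hq]] := xx_spec up hp idem pA b0.
  by rewrite hq (bit_mul q hlt) in hj. }
move=> hab ha hb. case: (ltngtP a b) => h.
- exact: (main a b h ha hb).
- exact: (main b a h hb ha).
- by apply: hab.
Qed.

Definition Vset N (P : nat -> bool) : nset := fun z => has (fun n => P n && Uset (x n) z) (iota 0 N).

Lemma Vset_spec N (P : nat -> bool) z : Vset N P z <-> exists n, n < N /\ P n /\ Uset (x n) z.
Proof.
split.
- move/hasP => [n hn /andP [h1 h2]]. exists n. by rewrite mem_iota add0n in hn.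
- move=> [n [h1 [h2 h3]]]. apply/hasP. exists n; first by rewrite mem_iota add0n.
  by rewrite h2.
Qed.

Lemma bool_ext (a b : bool) : (a <-> b) -> a = b.
Proof. destruct a, b; try reflexivity; intros [h1 h2]; [exact (esym (h1 isT)) | exact (h2 isT)]. Qed.

Lemma Vset_U N (P : nat -> bool) : Vset N P = Uset (\sum_(0 <= n < N | P n) x n).
Proof.
apply: nset_ext => z. apply: bool_ext. rewrite Vset_spec U_spec. split.
- move=> [n [hn [Pn /U_spec [i [hi fi]]]]]. exists i; split => //.
  rewrite (sum_bits up hp idem pA). apply/hasP. exists n; first by rewrite mem_iota add0n.
  by rewrite Pn hi.
- move=> [i [hi fi]]. rewrite (sum_bits up hp idem pA) in hi.
  move/hasP: hi => [n hn /andP [Pn hb]]. exists n. rewrite mem_iota add0n in hn.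
  split => //; split => //. apply/U_spec. by exists i.
Qed.

Lemma Vset_col N (P : nat -> bool) : (exists n, n < N /\ P n) -> 0 < \sum_(0 <= n < N | P n) x n /\ c (Vset N P) = k.
Proof. move=> ex. rewrite Vset_U. exact: (GG_sum up hp idem pA ex). Qed.

Definition Tf : nfamily := fun X => exists N (P : nat -> bool),
  (exists n, n < N /\ P n) /\ (forall n, P n -> 0 < n) /\ X = Vset N P.

Lemma Tf_S X : Tf X -> S X.
Proof. move=> [N [P [ex [_ ->]]]]. rewrite Vset_U. apply: U_S. exact: (Vset_col ex).1. Qed.

Lemma Tf_IP : IP_set Tf.
Proof.
split; [|split].
- move=> X hX. apply: Sfin. exact: Tf_S.
- move=> X Y [N1 [P1 [[n1 [h1 h1']] [hP1 ->]]]] [N2 [P2 [[n2 [h2 h2']] [hP2 ->]]]].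
  exists (N1 + N2), (fun n => ((n < N1) && P1 n) || ((n < N2) && P2 n)).
  split; [|split].
  + exists n1. rewrite h1 h1' /=. split => //. by apply: (leq_trans h1); rewrite leq_addr.
  + move=> n /orP [/andP [_ h]|/andP [_ h]]; [exact: hP1|exact: hP2].
  + apply: nset_ext => z. apply: bool_ext. rewrite /setU. split.
    * move/orP => [/Vset_spec [n [hn [Pn hu]]]|/Vset_spec [n [hn [Pn hu]]]]; apply/Vset_spec; exists n.
      -- rewrite hn Pn. split => //. by apply: (leq_trans hn); rewrite leq_addr.
      -- rewrite hn Pn orbT. split => //. by apply: (leq_trans hn); rewrite leq_addl.
    * move/Vset_spec => [n [hn [/orP [/andP [h Pn]|/andP [h Pn]] hu]]]; apply/orP; [left|right];
        apply/Vset_spec; exists n; by split.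
- exists (fun n => Vset n.+2 (fun j => j == n.+1)). split; [|split].
  + move=> n. exists n.+2, (fun j => j == n.+1). split; [|split] => //.
    * exists n.+1. by split.
    * by move=> j /eqP ->.
  + move=> a b e. apply: NNPP => hab.
    have [z hz] := U_ne (xx_spec up hp idem pA b.+1).1.
    have hb : Vset b.+2 (fun j => j == b.+1) z by apply/Vset_spec; exists b.+1.
    rewrite -e in hb. move/Vset_spec: hb => [n [_ [/eqP en hu]]]. subst n.
    apply: (disjU _ hu hz). by move=> [].
  + move=> a b hab z. apply/negP => /andP [/Vset_spec [n [_ [/eqP en hu]]] /Vset_spec [m [_ [/eqP em hv]]]].
    subst. apply: (disjU _ hu hv). by move=> [].
Qed.

Lemma Tf_minus : subfam_minus Tf S 1 (fun _ => Uset (x 0)).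
Proof.
move=> X hX. split; first exact: Tf_S.
move=> i _ z. apply/negP => /andP [hXz hz].
move: hX => [N [P [_ [hP e]]]]. subst X. move/Vset_spec: hXz => [n [_ [Pn hu]]].
apply: (disjU _ hu hz). move=> en; subst n. by have := hP 0 Pn.
Qed.

Lemma Tf_half : half_matches c 1 (fun _ => Uset (x 0)) Tf.
Proof.
move=> X [N [P [ex [hP e]]]]. subst X. exists 0 => //.
rewrite (Vset_col ex).2.
have [n0 [hn0 _]] := ex.
have -> : setU (Uset (x 0)) (Vset N P) = Vset N (fun n => (n == 0) || P n).
{ apply: nset_ext => z. apply: bool_ext. rewrite /setU. split.
  - move/orP => [hu|/Vset_spec [n [hn [Pn hu]]]]; apply/Vset_spec.
    + exists 0; split => //. by apply: (leq_ltn_trans _ hn0).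
    + exists n. by rewrite Pn orbT.
  - move/Vset_spec => [n [hn [/orP [/eqP en|Pn] hu]]]; apply/orP.
    + subst n. by left.
    + right. apply/Vset_spec. by exists n. }
symmetry. apply: (Vset_col _).2. exists 0. split => //. by apply: (leq_ltn_trans _ hn0).
Qed.

Lemma x0_S : fin_coll_in S 1 (fun _ => Uset (x 0)).
Proof. move=> i _. apply: U_S. exact: (xx_spec up hp idem pA 0).1. Qed.

End Inner.

End Main.


Theorem lemma2p2 (S : nfamily) (r : nat) (c : nset -> nat) :
  IP_set S -> 1 <= r ->
  (forall A, NU S A -> 1 <= c A <= r) ->
  exists (n : nat) (g : nat -> nset) (T : nfamily),
    fin_coll_in S n g /\ IP_set T /\ subfam_minus T S n g /\
    half_matches c n g T.
Proof.
move=> [Sfin [Sun [f [fS [finj fdisj]]]]] hr hc.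
have [p [up [hp idem]]] := idempotent_exists Ek Ek_add Ek_cap Ek_ne.
have hall : p (fun m => exists k, k < r /\ (fun k m => 0 < m /\ c (Uset f m) = k.+1) k m).
{ apply: (uf_up up (hp 0)) => m [hm _]. have := col_range Sun fS finj hc hm.
  move=> /andP [h1 h2]. exists (c (Uset f m)).-1. rewrite prednK //.
  }
have [k [hk pk]] := uf_finite up hall.
have pA : p (Acol c f k.+1) by exact: pk.
exists 1, (fun _ => Uset f (xx p (Acol c f k.+1) 0)), (Tf c f p k.+1).
split; [|split; [|split]].
- exact: (x0_S Sun fS up hp idem pA).
- exact: (Tf_IP Sfin Sun fS finj fdisj up hp idem pA).
- exact: (Tf_minus Sun fS fdisj up hp idem pA).
- exact: (Tf_half up hp idem pA).
Qed.
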